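(* Let $n\geq 2$. For $f:[0,1]\to\mathbb{R}$ and $x\in[0,1]$ define $$R_n(f,x)=\sum_{k=0}^{n} f\left(\frac{k}{n}\right)\binom{n}{k}\frac{x^{(k,c(x))}\,(1-x)^{(n-k,c(x))}}{1^{(n,c(x))}},\qquad c(x)=-\frac{\min\{x,1-x\}}{n-1}.$$ If $f:[0,1]\to\mathbb{R}$ is monotone increasing (respectively decreasing), then $R_n(f,\cdot):[0,1]\to\mathbb{R}$ is also monotone increasing (respectively decreasing).
   Context: For real $z$ and $h$, the rising factorial with increment $h$ is $z^{(0,h)}=1$ and $z^{(m,h)}=z(z+h)\cdots(z+(m-1)h)$ for integers $m\geq 1$. Equivalently, $R_n(f,x)=E\,f\left(\frac1n X\right)$, where $X$ is the number of white balls in $n$ draws from a Pólya urn initially containing $x$ white and $1-x$ black balls with replacement parameter $c(x)$. *)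

(* Defs.v *)
From mathcomp Require Import all_boot all_order all_algebra.
From mathcomp Require Import all_reals.
Set Implicit Arguments. Unset Strict Implicit. Unset Printing Implicit Defensive.
Import Order.TTheory GRing.Theory Num.Theory.
Local Open Scope ring_scope.

Definition rising_fact (R : realType) (z h : R) (m : nat) : R :=
  \prod_(i < m) (z + i%:R * h).

Definition polya_c (R : realType) (n : nat) (x : R) : R :=
  - (Num.min x (1 - x)) / (n.-1)%:R.

Definition polya_op (R : realType) (n : nat) (f : R -> R) (x : R) : R :=
  \sum_(k < n.+1)
    f (k%:R / n%:R) * 'C(n, k)%:R *
    (rising_fact x (polya_c n x) k * rising_fact (1 - x) (polya_c n x) (n - k)
     / rising_fact 1 (polya_c n x) n).

Definition incr_on01 (R : realType) (g : R -> R) : Prop :=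
  forall x y : R, 0 <= x -> x <= y -> y <= 1 -> g x <= g y.
Definition decr_on01 (R : realType) (g : R -> R) : Prop :=
  forall x y : R, 0 <= x -> x <= y -> y <= 1 -> g y <= g x.

(* Main.v *)
Require Import Defs.
From mathcomp Require Import all_boot all_order all_algebra.
From mathcomp Require Import all_reals.
From mathcomp Require Import ring lra.
Import Order.TTheory GRing.Theory Num.Theory.
Local Open Scope ring_scope.
From mathcomp Require Import zify.

Lemma rfS (R : realType) (z h : R) m : rising_fact z h m.+1 = rising_fact z h m * (z + m%:R * h).
Proof. by rewrite /rising_fact big_ord_recr. Qed.

Lemma rf0 (R : realType) (z h : R) : rising_fact z h 0 = 1.
Proof. by rewrite /rising_fact big_ord0. Qed.

Lemma vandermonde (R : realType) (w b c : R) n :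
  \sum_(k < n.+1) 'C(n, k)%:R * rising_fact w c k * rising_fact b c (n - k)
  = rising_fact (w + b) c n.
Proof.
elim: n => [|n IH].
  by rewrite big_ord1 /= !rf0 !mulr1.
rewrite rfS -IH big_distrl /=.
have E : forall k : 'I_n.+1, 'C(n, k)%:R * rising_fact w c k * rising_fact b c (n - k) * (w + b + n%:R * c)
   = 'C(n, k)%:R * rising_fact w c k.+1 * rising_fact b c (n - k) + 'C(n, k)%:R * rising_fact w c k * rising_fact b c (n - k).+1.
  move=> k; have hk : (k <= n)%N by rewrite -ltnS.
  rewrite !rfS natrB //; ring.
rewrite (eq_bigr _ (fun k _ => E k)) big_split /=.
rewrite big_ord_recl /= subn0 rf0 bin0 mul1r.
under eq_bigr => i _ do rewrite /bump leq0n add1n subSS binS natrD !mulrDl.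
rewrite big_split /=.
have F : \sum_(i < n.+1) 'C(n, i.+1)%:R * rising_fact w c i.+1 * rising_fact b c (n - i)
   = \sum_(i < n) 'C(n, bump 0 i)%:R * rising_fact w c (bump 0 i) * rising_fact b c (n - bump 0 i).+1.
  rewrite big_ord_recr /= bin_small // !mul0r addr0.
  by apply: eq_bigr => i _; rewrite /bump leq0n add1n subnSK.
have G : \sum_(i < n.+1) 'C(n, i)%:R * rising_fact w c i * rising_fact b c (n - i).+1
   = rising_fact b c n.+1 + \sum_(i < n) 'C(n, bump 0 i)%:R * rising_fact w c (bump 0 i) * rising_fact b c (n - bump 0 i).+1.
  by rewrite big_ord_recl /= bin0 subn0 rf0 !mul1r.
rewrite F G; ring.
Qed.

Lemma tp2_avg (R : realType) N (g Q Q' : 'I_N -> R) :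
 (forall k l : 'I_N, (k <= l)%N -> g k <= g l) ->
 (forall k l : 'I_N, (k < l)%N -> Q l * Q' k <= Q k * Q' l) ->
 0 < \sum_k Q k -> 0 < \sum_k Q' k ->
 (\sum_k g k * Q k) / (\sum_k Q k) <= (\sum_k g k * Q' k) / (\sum_k Q' k).
Proof.
move=> hg hQ hD hD'.
rewrite ler_pdivrMr // mulrAC ler_pdivlMr //.
set S := \sum_k \sum_l (g l - g k) * Q k * Q' l.
have Eb : (\sum_k g k * Q' k) * (\sum_k Q k) = \sum_k \sum_l g l * Q k * Q' l.
  rewrite big_distrl /= exchange_big /=; apply: eq_bigr => l _.
  rewrite big_distrr /=; apply: eq_bigr => k _; ring.
have Ea : (\sum_k g k * Q k) * (\sum_k Q' k) = \sum_k \sum_l g k * Q k * Q' l.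
  rewrite big_distrl /=; apply: eq_bigr => k _.
  rewrite big_distrr /=; apply: eq_bigr => l _; ring.
have ES : S = (\sum_k \sum_l g l * Q k * Q' l) - \sum_k \sum_l g k * Q k * Q' l.
  rewrite /S -sumrB; apply: eq_bigr => k _; rewrite -sumrB; apply: eq_bigr => l _; ring.
have ES2 : S = \sum_k \sum_l (g k - g l) * Q l * Q' k.
  by rewrite /S exchange_big.
have : 0 <= S + S.
  rewrite {1}ES2 /S -big_split /=; apply: sumr_ge0 => k _.
  rewrite -big_split /=; apply: sumr_ge0 => l _.
  case: (ltngtP k l) => hkl.
  - have h1 := hg _ _ (ltnW hkl); have h2 := hQ _ _ hkl.
    have -> : (g k - g l) * Q l * Q' k + (g l - g k) * Q k * Q' l
      = (g l - g k) * (Q k * Q' l - Q l * Q' k) by ring.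
    by apply: mulr_ge0; rewrite subr_ge0.
  - have h1 := hg _ _ (ltnW hkl); have h2 := hQ _ _ hkl.
    have -> : (g k - g l) * Q l * Q' k + (g l - g k) * Q k * Q' l
      = (g k - g l) * (Q l * Q' k - Q k * Q' l) by ring.
    by apply: mulr_ge0; rewrite subr_ge0.
  - have -> : k = l by apply: val_inj.
    by rewrite subrr !mul0r addr0.
rewrite Ea Eb; lra.
Qed.

Lemma min_cases (R : realType) (x : R) :
  (Num.min x (1 - x) = x /\ x <= 1 - x) \/ (Num.min x (1 - x) = 1 - x /\ 1 - x <= x).
Proof.
rewrite /Order.min; case: (ltrP x (1 - x)) => h; [left; split=> //; exact: ltW | by right].
Qed.

Lemma Amono (R : realType) (x y s : R) : 0 <= x -> x <= y -> y <= 1 -> 0 <= s <= 1 ->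
  x - s * Num.min x (1 - x) <= y - s * Num.min y (1 - y).
Proof.
move=> h0 hxy h1 /andP[s0 s1].
case: (min_cases _ x) => [[-> hx]|[-> hx]]; case: (min_cases _ y) => [[-> hy]|[-> hy]]; nra.
Qed.

Lemma Bmono (R : realType) (x y s : R) : 0 <= x -> x <= y -> y <= 1 -> 0 <= s <= 1 ->
  1 - y - s * Num.min y (1 - y) <= 1 - x - s * Num.min x (1 - x).
Proof.
move=> h0 hxy h1 /andP[s0 s1].
case: (min_cases _ x) => [[-> hx]|[-> hx]]; case: (min_cases _ y) => [[-> hy]|[-> hy]]; nra.
Qed.

Lemma Age0 (R : realType) (x s : R) : 0 <= x -> x <= 1 -> 0 <= s <= 1 ->
  0 <= x - s * Num.min x (1 - x).
Proof.
move=> h0 h1 /andP[s0 s1].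
case: (min_cases _ x) => [[-> hx]|[-> hx]]; nra.
Qed.

Lemma Bge0 (R : realType) (x s : R) : 0 <= x -> x <= 1 -> 0 <= s <= 1 ->
  0 <= 1 - x - s * Num.min x (1 - x).
Proof.
move=> h0 h1 /andP[s0 s1].
case: (min_cases _ x) => [[-> hx]|[-> hx]]; nra.
Qed.

Lemma Dgt0 (R : realType) (x s : R) : 0 <= x -> x <= 1 -> 0 <= s <= 1 ->
  0 < 1 - s * Num.min x (1 - x).
Proof.
move=> h0 h1 /andP[s0 s1].
case: (min_cases _ x) => [[-> hx]|[-> hx]]; nra.
Qed.

Lemma cfac (R : realType) n i (x : R) :
  i%:R * polya_c n x = - (i%:R / (n.-1)%:R * Num.min x (1 - x)).
Proof. rewrite /polya_c; ring. Qed.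

Lemma s_bounds (R : realType) n i : (2 <= n)%N -> (i < n)%N ->
  0 <= (i%:R / (n.-1)%:R : R) <= 1.
Proof.
move=> hn hi; apply/andP; split; first by apply: divr_ge0.
have hp : (0 : R) < (n.-1)%:R by rewrite ltr0n; case: n hn hi => [|[|n]].
rewrite ler_pdivrMr // mul1r ler_nat.
by case: n hn hi hp => [|n] //= _; rewrite ltnS.
Qed.

Lemma rf_add (R : realType) (z h : R) a d :
  rising_fact z h (a + d) = rising_fact z h a * \prod_(i < d) (z + (a + i)%:R * h).
Proof. by rewrite /rising_fact big_split_ord. Qed.

Definition qq {R : realType} n (x : R) (k : nat) :=
  'C(n, k)%:R * rising_fact x (polya_c n x) k * rising_fact (1 - x) (polya_c n x) (n - k).

Lemma qq_tp2 (R : realType) n (hn : (2 <= n)%N) (x y : R) k l :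
  0 <= x -> x <= y -> y <= 1 -> (k < l)%N -> (l <= n)%N ->
  qq n x l * qq n y k <= qq n x k * qq n y l.
Proof.
move=> h0 hxy h1 hkl hln.
have hx1 : x <= 1 by apply: le_trans h1.
have hy0 : 0 <= y by apply: le_trans hxy.
have hA : forall i, (i < n)%N -> 0 <= x + i%:R * polya_c n x <= y + i%:R * polya_c n y.
  move=> i hi; rewrite !cfac; have hs := @s_bounds R _ _ hn hi.
  by apply/andP; split; [exact: Age0 | exact: Amono].
have hB : forall i, (i < n)%N -> 0 <= 1 - y + i%:R * polya_c n y <= 1 - x + i%:R * polya_c n x.
  move=> i hi; rewrite !cfac; have hs := @s_bounds R _ _ hn hi.
  by apply/andP; split; [exact: Bge0 | exact: Bmono].
have hA0 : forall z : R, 0 <= z -> z <= 1 -> forall i, (i < n)%N -> 0 <= z + i%:R * polya_c n z.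
  move=> z z0 z1 i hi; rewrite cfac; have hs := @s_bounds R _ _ hn hi; exact: Age0.
have hB0 : forall z : R, 0 <= z -> z <= 1 -> forall i, (i < n)%N -> 0 <= 1 - z + i%:R * polya_c n z.
  move=> z z0 z1 i hi; rewrite cfac; have hs := @s_bounds R _ _ hn hi; exact: Bge0.
have [d hd] : exists d, l = (k + d)%N by exists (l - k)%N; lia.
subst l.
have [e [he1 he2]] : exists e, (n - k = e + d)%N /\ (n - (k + d) = e)%N.
  by exists (n - (k + d))%N; split; lia.
rewrite /qq he1 he2 !rf_add.
set C1 := 'C(n, k + d)%:R; set C2 := 'C(n, k)%:R.
set rxk := rising_fact x _ k; set ryk := rising_fact y _ k.
set rxe := rising_fact (1 - x) _ e; set rye := rising_fact (1 - y) _ e.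
set Atx := \prod_(i < d) (x + _); set Aty := \prod_(i < d) (y + _).
set Btx := \prod_(i < d) (1 - x + _); set Bty := \prod_(i < d) (1 - y + _).
have hC1 : 0 <= C1 by apply: ler0n.
have hC2 : 0 <= C2 by apply: ler0n.
have hkn : (k < n)%N by apply: leq_trans hkl hln.
have hen : (e <= n)%N by rewrite -he2 leq_subr.
have hedn : (e + d <= n)%N by rewrite -he1 leq_subr.
have hrxk : 0 <= rxk by apply: prodr_ge0 => i _; apply: hA0 => //; exact: ltn_trans (ltn_ord i) hkn.
have hryk : 0 <= ryk by apply: prodr_ge0 => i _; apply: hA0 => //; exact: ltn_trans (ltn_ord i) hkn.
have hrxe : 0 <= rxe by apply: prodr_ge0 => i _; apply: hB0 => //; exact: leq_trans (ltn_ord i) hen.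
have hrye : 0 <= rye by apply: prodr_ge0 => i _; apply: hB0 => //; exact: leq_trans (ltn_ord i) hen.
have hki : forall i : 'I_d, (k + i < n)%N.
  by move=> i; apply: leq_trans hln; rewrite ltn_add2l.
have hei : forall i : 'I_d, (e + i < n)%N.
  by move=> i; apply: leq_trans hedn; rewrite ltn_add2l.
have hAtx : 0 <= Atx by apply: prodr_ge0 => i _; apply: hA0.
have hBty : 0 <= Bty by apply: prodr_ge0 => i _; apply: hB0.
have hAA : Atx <= Aty by apply: ler_prod => i _; apply: hA.
have hBB : Bty <= Btx by apply: ler_prod => i _; apply: hB.
have hP : Atx * Bty <= Aty * Btx by apply: ler_pM.
have hX : 0 <= C1 * C2 * rxk * ryk * rxe * rye by do !apply: mulr_ge0.
have -> : C1 * (rxk * Atx) * rxe * (C2 * ryk * (rye * Bty))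
  = (C1 * C2 * rxk * ryk * rxe * rye) * (Atx * Bty) by ring.
have -> : C2 * rxk * (rxe * Btx) * (C1 * (ryk * Aty) * rye)
  = (C1 * C2 * rxk * ryk * rxe * rye) * (Aty * Btx) by ring.
exact: ler_wpM2l.
Qed.

Lemma polya_eq (R : realType) n (f : R -> R) x :
  polya_op n f x = (\sum_(k < n.+1) f (k%:R / n%:R) * qq n x k) / (\sum_(k < n.+1) qq n x k).
Proof.
rewrite /polya_op /qq vandermonde (_ : x + (1 - x) = 1); last by ring.
rewrite mulr_suml; apply: eq_bigr => k _; ring.
Qed.

Lemma qq_sum_gt0 (R : realType) n (hn : (2 <= n)%N) (x : R) : 0 <= x -> x <= 1 ->
  0 < \sum_(k < n.+1) qq n x k.
Proof.
move=> h0 h1; rewrite /qq vandermonde (_ : x + (1 - x) = 1); last by ring.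
apply: prodr_gt0 => i _; rewrite cfac; apply: Dgt0 => //.
exact: s_bounds.
Qed.

Theorem theorem3p3 (R : realType) (n : nat) (hn : (2 <= n)%N) (f : R -> R) :
  (incr_on01 f -> incr_on01 (polya_op n f)) /\
  (decr_on01 f -> decr_on01 (polya_op n f)).
Proof.
have hn0 : (0 : R) < n%:R by rewrite ltr0n; lia.
have hg : forall k l : 'I_n.+1, (k <= l)%N ->
   [/\ (0 : R) <= k%:R / n%:R, (k%:R / n%:R : R) <= l%:R / n%:R & (l%:R / n%:R : R) <= 1].
  move=> k l hkl; split.
  - by apply: divr_ge0.
  - by apply: ler_wpM2r; [rewrite invr_ge0 ltW | rewrite ler_nat].
  - rewrite ler_pdivrMr // mul1r ler_nat; have := ltn_ord l; lia.
have hx1 : forall x y : R, x <= y -> y <= 1 -> x <= 1 by move=> x y a b; apply: le_trans b.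
have hy0 : forall x y : R, 0 <= x -> x <= y -> 0 <= y by move=> x y a b; apply: le_trans b.
split=> hf x y h0 hxy h1; rewrite !polya_eq.
- apply: tp2_avg.
  + by move=> k l hkl; have [a b c] := hg k l hkl; apply: hf.
  + move=> k l hkl; apply: qq_tp2 => //; have := ltn_ord l; lia.
  + by apply: qq_sum_gt0 => //; apply: hx1 h1.
  + by apply: qq_sum_gt0 => //; apply: hy0 hxy.
- have E : forall z : R, \sum_(k < n.+1) - f (k%:R / n%:R) * qq n z k
      = - \sum_(k < n.+1) f (k%:R / n%:R) * qq n z k.
    by move=> z; rewrite -sumrN; apply: eq_bigr => k _; rewrite mulNr.
  have key := @tp2_avg R n.+1 (fun k : 'I_n.+1 => - f (k%:R / n%:R)) (fun k => qq n x k) (fun k => qq n y k).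
  rewrite /= !E !mulNr lerN2 in key; apply: key.
  + by move=> k l hkl; have [a b c] := hg k l hkl; rewrite lerN2; apply: hf.
  + move=> k l hkl; apply: qq_tp2 => //; have := ltn_ord l; lia.
  + by apply: qq_sum_gt0 => //; apply: hx1 h1.
  + by apply: qq_sum_gt0 => //; apply: hy0 hxy.
Qed.
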